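(* Let $(X,|\cdot|_X)$ be a Banach space, $T>0$, and let $A\colon D(A)\subset X\to X$ be the infinitesimal generator of a $C_0$-semigroup $\{S(t): t\ge 0\}$ of bounded linear operators on $X$. Let $a,b,k>0$ and let $F,G\colon X^2\to X$ be continuous. Define $N_1,N_2\colon C([0,T];X)^2\to C([0,T];X)$ by \begin{align*} N_1(x,y)(t) &= \frac{1}{a}S(t)\Big[S(T)x(0)-kS(T)y(0)+kb\,y(0) + \int_0^T S(T-s)\big(F(x(s),y(s))-kG(x(s),y(s))\big)\,ds\Big] \\ &\quad+\int_0^t S(t-s)F(x(s),y(s))\,ds,\\ N_2(x,y)(t) &= \frac{1}{kb}S(t)\Big[-S(T)x(0)+kS(T)y(0)+a\,x(0) - \int_0^T S(T-s)\big(F(x(s),y(s))-kG(x(s),y(s))\big)\,ds\Big] \\ &\quad+\int_0^t S(t-s)G(x(s),y(s))\,ds, \end{align*} for $t\in[0,T]$. If $(x,y)\in C([0,T];X)^2$ satisfies $x=N_1(x,y)$ and $y=N_2(x,y)$, then for all $t\in[0,T]$ \[ x(t)=S(t)x(0)+\int_0^t S(t-s)F(x(s),y(s))\,ds,\qquad y(t)=S(t)y(0)+\int_0^t S(t-s)G(x(s),y(s))\,ds, \] and moreover $x(T)-a\,x(0)=k\big(y(T)-b\,y(0)\big)$.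
   Context: Integrals are Bochner/Riemann integrals of continuous $X$-valued functions. The two integral equations say that $x,y$ form a mild solution of the system $x'=Ax+F(x,y)$, $y'=Ay+G(x,y)$ on $[0,T]$. *)

(* Defs.v *)
From Stdlib Require Import Reals.
From Coquelicot Require Import Coquelicot.
Open Scope R_scope.

Section Defs.
Context {X : CompleteNormedModule R_AbsRing}.

(** {S(t) : t >= 0} is a C_0-semigroup of bounded linear operators on X.
    (Values of S at t < 0 are irrelevant.)  Coquelicot's [is_linear]
    includes boundedness. *)
Definition C0_semigroup (S : R -> X -> X) : Prop :=
  (forall t, 0 <= t -> is_linear (S t)) /\
  (forall x, S 0 x = x) /\
  (forall t s x, 0 <= t -> 0 <= s -> S (t + s) x = S t (S s x)) /\
  (forall x, filterlim (fun t => S t x) (at_right 0) (locally x)).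

Definition is_generator (S : R -> X -> X) (D : X -> Prop) (A : X -> X) : Prop :=
  forall x,
    (D x <-> exists l : X,
       filterlim (fun h => scal (/ h) (minus (S h x) x)) (at_right 0) (locally l)) /\
    (D x -> filterlim (fun h => scal (/ h) (minus (S h x) x)) (at_right 0) (locally (A x))).

Definition cont_on_0T (T : R) (x : R -> X) : Prop :=
  forall t, 0 <= t <= T ->
    filterlim x (within (fun u => 0 <= u <= T) (locally t)) (locally (x t)).

Definition Iterm (S : R -> X -> X) (T k : R) (F G : X * X -> X)
  (x y : R -> X) : X :=
  RInt (fun s => S (T - s) (minus (F (x s, y s)) (scal k (G (x s, y s))))) 0 T.

Definition N1 (S : R -> X -> X) (T a b k : R) (F G : X * X -> X)
  (x y : R -> X) (t : R) : X :=
  plus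
    (scal (/ a) (S t (plus (plus (plus (S T (x 0)) (opp (scal k (S T (y 0)))))
                                  (scal (k * b) (y 0)))
                            (Iterm S T k F G x y))))
    (RInt (fun s => S (t - s) (F (x s, y s))) 0 t).

Definition N2 (S : R -> X -> X) (T a b k : R) (F G : X * X -> X)
  (x y : R -> X) (t : R) : X :=
  plus
    (scal (/ (k * b)) (S t (minus (plus (plus (opp (S T (x 0))) (scal k (S T (y 0))))
                                         (scal a (x 0)))
                                   (Iterm S T k F G x y))))
    (RInt (fun s => S (t - s) (G (x s, y s))) 0 t).

End Defs.

(* Main.v *)
Require Import Defs.
From Stdlib Require Import Reals.
From Coquelicot Require Import Coquelicot.
Open Scope R_scope.
From Stdlib Require Import Lra Lia ClassicalEpsilon Classical.

Section UBP.
Context {X : CompleteNormedModule R_AbsRing}.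

Lemma Xplus_opp_r (x : X) : plus x (opp x) = zero. Proof. exact (@plus_opp_r (CompleteNormedModule.AbelianGroup R_AbsRing X) _). Qed.
Lemma Xplus_opp_l (x : X) : plus (opp x) x = zero. Proof. exact (@plus_opp_l (CompleteNormedModule.AbelianGroup R_AbsRing X) _). Qed.
Lemma Xplus_zero_r (x : X) : plus x zero = x. Proof. exact (@plus_zero_r (CompleteNormedModule.AbelianGroup R_AbsRing X) _). Qed.
Lemma Xplus_zero_l (x : X) : plus zero x = x. Proof. exact (@plus_zero_l (CompleteNormedModule.AbelianGroup R_AbsRing X) _). Qed.
Lemma Xplus_assoc (x y z : X) : plus x (plus y z) = plus (plus x y) z. Proof. exact (@plus_assoc (CompleteNormedModule.AbelianGroup R_AbsRing X) x y z). Qed.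
Lemma Xplus_comm (x y : X) : plus x y = plus y x. Proof. exact (@plus_comm (CompleteNormedModule.AbelianGroup R_AbsRing X) x y). Qed.
Lemma Xopp_opp (x : X) : opp (opp x) = x. Proof. exact (@opp_opp (CompleteNormedModule.AbelianGroup R_AbsRing X) _). Qed.
Lemma Xopp_plus (x y : X) : opp (plus x y) = plus (opp x) (opp y). Proof. exact (@opp_plus (CompleteNormedModule.AbelianGroup R_AbsRing X) x y). Qed.
Lemma Xnorm_opp (x : X) : norm (opp x) = norm x. Proof. exact (@norm_opp R_AbsRing (CompleteNormedModule.NormedModule R_AbsRing X) x). Qed.
Lemma Xnorm_zero : norm (@zero X) = 0. Proof. exact (@norm_zero R_AbsRing (CompleteNormedModule.NormedModule R_AbsRing X)). Qed.
Lemma Xminus_eq_zero (x : X) : minus x x = zero. Proof. exact (@minus_eq_zero (CompleteNormedModule.AbelianGroup R_AbsRing X) _). Qed.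
Lemma Xnorm_ge_0 (x : X) : 0 <= norm x. Proof. exact (@norm_ge_0 R_AbsRing (CompleteNormedModule.NormedModule R_AbsRing X) x). Qed.
Lemma Xnorm_tri (x y : X) : norm (plus x y) <= norm x + norm y.
Proof. exact (@norm_triangle R_AbsRing _ x y). Qed.

Lemma Xlin_plus (L : X -> X) : is_linear L -> forall a b : X, L (plus a b) = plus (L a) (L b).
Proof. intros HL a b. exact (linear_plus L HL a b). Qed.
Lemma Xlin_scal (L : X -> X) : is_linear L -> forall (k : R) (a : X), L (scal k a) = scal k (L a).
Proof. intros HL k a. exact (linear_scal L HL k a). Qed.
Lemma Xlin_opp (L : X -> X) : is_linear L -> forall (a : X), L (opp a) = opp (L a).
Proof. intros HL a. exact (linear_opp L a HL). Qed.
Lemma Xlin_minus (L : X -> X) : is_linear L -> forall a b : X, L (minus a b) = minus (L a) (L b).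
Proof. intros HL a b. exact (linear_minus L a b HL). Qed.
Lemma Xlin_zero (L : X -> X) : is_linear L -> L zero = zero.
Proof. intros HL. exact (linear_zero L HL). Qed.
Lemma Xlin_norm (L : X -> X) : is_linear L -> exists M : R, 0 < M /\ (forall a : X, norm (L a) <= M * norm a).
Proof. intros HL. exact (linear_norm L HL). Qed.

Lemma Xnorm_mm (a : X) : norm (minus a a) = 0.
Proof. rewrite minus_eq_zero; exact (@norm_zero R_AbsRing _). Qed.

Lemma abs_R_eq (l : R) : abs l = Rabs l.
Proof. reflexivity. Qed.

Lemma norm_scal_eq (l : R) (v : X) : norm (scal l v) = Rabs l * norm v.
Proof.
  apply Rle_antisym.
  - rewrite <- abs_R_eq. exact (@norm_scal R_AbsRing _ l v).
  - destruct (Req_dec l 0) as [->|Hl].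
    + rewrite Rabs_R0. rewrite Rmult_0_l. apply norm_ge_0.
    + assert (E : v = scal (/ l) (scal l v)).
      { rewrite scal_assoc. change (mult (/ l) l) with (/ l * l).
        rewrite Rinv_l by exact Hl. exact (eq_sym (scal_one v)). }
      assert (H : norm v <= abs (/ l) * norm (scal l v)).
      { rewrite E at 1. exact (@norm_scal R_AbsRing _ (/ l) (scal l v)). }
      rewrite abs_R_eq in H. rewrite Rabs_inv in H.
      assert (0 < Rabs l) by (apply Rabs_pos_lt; exact Hl).
      apply Rmult_le_reg_l with (/ Rabs l). apply Rinv_0_lt_compat; lra.
      rewrite <- Rmult_assoc, Rinv_l by lra. lra.
Qed.

Lemma norm_minus_sym (u v : X) : norm (minus u v) = norm (minus v u).
Proof. rewrite <- norm_opp, opp_minus. reflexivity. Qed.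

Lemma norm_minus_tri (u v w : X) :
  norm (minus u w) <= norm (minus u v) + norm (minus v w).
Proof. rewrite (minus_trans v). exact (@norm_triangle R_AbsRing _ _ _). Qed.

Lemma norm_rev_tri (u v : X) : norm u - norm (minus u v) <= norm v.
Proof.
  assert (H : norm (plus (minus u v) v) <= norm (minus u v) + norm v)
    by exact (@norm_triangle R_AbsRing _ _ _).
  replace (plus (minus u v) v) with u in H. lra.
  unfold minus. rewrite <- plus_assoc, plus_opp_l, plus_zero_r. reflexivity.
Qed.

Lemma ubp_step (T : X -> X) (M : R) (z : X) : is_linear T -> 0 <= M ->
  norm (T z) > M * norm z ->
  forall (x : X) r, 0 < r -> exists x' : X, norm (minus x' x) <= r /\ norm (T x') >= M * r / 2.
Proof.
  intros HT HM Hz x r Hr.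
  assert (Hz0 : z <> zero).
  { intros E. assert (E0 : T z = zero) by (rewrite E; apply (linear_zero T HT)).
    assert (norm (T z) = 0) by (rewrite E0; exact (@norm_zero R_AbsRing _)).
    assert (norm z = 0) by (rewrite E; exact (@norm_zero R_AbsRing _)). nra. }
  assert (Hn := norm_gt_0 z Hz0).
  set (h := scal (r / norm z) z).
  assert (Hh : norm h = r).
  { unfold h. rewrite norm_scal_eq. rewrite Rabs_pos_eq.
    field. lra. apply Rlt_le. apply Rdiv_lt_0_compat; lra. }
  assert (HTh : norm (T h) > M * r).
  { unfold h. rewrite (Xlin_scal T HT). rewrite norm_scal_eq.
    rewrite Rabs_pos_eq by (apply Rlt_le; apply Rdiv_lt_0_compat; lra).
    apply Rlt_gt.
    replace (M * r) with ((r / norm z) * (M * norm z)) by (field; lra).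
    apply Rmult_lt_compat_l. apply Rdiv_lt_0_compat; lra. lra. }
  destruct (Rle_lt_dec (M * r / 2) (norm (T x))) as [Hx|Hx].
  - exists x. assert (norm (minus x x) = 0) by (rewrite minus_eq_zero; exact (@norm_zero R_AbsRing _)).
    split; lra.
  - exists (plus x h). split.
    + replace (minus (plus x h) x) with h. lra.
      unfold minus. rewrite (plus_comm x h). rewrite <- plus_assoc. rewrite Xplus_opp_r, Xplus_zero_r. reflexivity.
    + rewrite (Xlin_plus T HT).
      assert (H := norm_rev_tri (T h) (opp (T x))).
      replace (minus (T h) (opp (T x))) with (plus (T x) (T h)) in H.
      rewrite Xnorm_opp in H. lra.
      unfold minus. rewrite Xopp_opp, Xplus_comm. reflexivity.
Qed.


Lemma Xnorm_compat1 (a b : X) (e : R) : norm (minus b a) < e -> ball a e b.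
Proof. intro H. exact (@norm_compat1 R_AbsRing _ a b e H). Qed.
Lemma Xnorm_compat2 (a b : X) (e : posreal) : ball a e b -> norm (minus b a) < @norm_factor R_AbsRing X * e.
Proof. intro H. exact (@norm_compat2 R_AbsRing _ a b e H). Qed.

Lemma ubp (Tn : nat -> X -> X) : (forall n, is_linear (Tn n)) ->
  (forall z : X, exists B, forall n, norm (Tn n z) <= B) ->
  exists M, forall n (z : X), norm (Tn n z) <= M * norm z.
Proof.
  intros Hlin Hpt. apply NNPP. intro Hno.
  assert (Hbig : forall M, exists n (z : X), norm (Tn n z) > M * norm z).
  { intros M. apply NNPP; intro H1. apply Hno. exists M. intros n z.
    apply Rnot_lt_le. intro H2. apply H1. exists n, z. exact H2. }
  assert (Hstep : forall (j : nat) (p : X * R), exists q : nat * (X * R),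
    0 < snd p -> norm (minus (fst (snd q)) (fst p)) <= snd p /\ 0 < snd (snd q) /\
      snd (snd q) <= snd p / 2 /\
      forall u : X, norm (minus u (fst (snd q))) <= 3 * snd (snd q) -> norm (Tn (fst q) u) > INR j).
  { intros j [x r]. simpl. destruct (Rlt_dec 0 r) as [Hr|Hr]; [| exists (O,(x,r)); intro; lra].
    assert (Hj := pos_INR j).
    assert (HM : 0 <= 2 * (INR j + 1) / r) by (apply Rlt_le, Rdiv_lt_0_compat; lra).
    destruct (Hbig (2 * (INR j + 1) / r)) as [n [z Hz]].
    destruct (ubp_step (Tn n) _ z (Hlin n) HM Hz x r Hr) as [x' [Hx1 Hx2]].
    destruct (Xlin_norm _ (Hlin n)) as [C [HC HCb]].
    exists (n, (x', Rmin (r/2) (1/(6*C)))). simpl. intros _. split; [exact Hx1|].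
    assert (0 < 1 / (6 * C)) by (apply Rdiv_lt_0_compat; lra).
    split. apply Rmin_glb_lt; lra. split. apply Rmin_l.
    intros u Hu.
    replace (2 * (INR j + 1) / r * r / 2) with (INR j + 1) in Hx2 by (field; lra).
    assert (H1 := norm_rev_tri (Tn n x') (Tn n u)).
    rewrite <- (Xlin_minus _ (Hlin n)) in H1.
    assert (H2 := HCb (minus x' u)). rewrite norm_minus_sym in H2.
    assert (H3 : C * norm (minus u x') <= C * (3 * (1 / (6 * C)))).
    { apply Rmult_le_compat_l. lra. assert (H4 := Rmin_r (r/2) (1/(6*C))). lra. }
    replace (C * (3 * (1 / (6 * C)))) with (1/2) in H3 by (field; lra).
    lra. }
  set (f := fun j p => proj1_sig (constructive_indefinite_description _ (Hstep j p))).
  assert (Hf : forall j p, 0 < snd p -> norm (minus (fst (snd (f j p))) (fst p)) <= snd p /\ 0 < snd (snd (f j p)) /\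
      snd (snd (f j p)) <= snd p / 2 /\
      forall u : X, norm (minus u (fst (snd (f j p)))) <= 3 * snd (snd (f j p)) -> norm (Tn (fst (f j p)) u) > INR j).
  { intros j p. exact (proj2_sig (constructive_indefinite_description _ (Hstep j p))). }
  clearbody f.
  set (ps := fix ps (j : nat) : X * R := match j with O => (zero, 1) | S j' => snd (f j' (ps j')) end).
  assert (EpS : forall j, ps (S j) = snd (f j (ps j))) by reflexivity.
  assert (Ep0 : snd (ps O) = 1) by reflexivity.
  assert (Hpos : forall j, 0 < snd (ps j)).
  { induction j. rewrite Ep0. lra. rewrite EpS. apply (Hf j (ps j) IHj). }
  assert (F1 : forall j, norm (minus (fst (ps (S j))) (fst (ps j))) <= snd (ps j)).
  { intro j. rewrite EpS. apply (Hf j (ps j) (Hpos j)). }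
  assert (F2 : forall j, snd (ps (S j)) <= snd (ps j) / 2).
  { intro j. rewrite EpS. apply (Hf j (ps j) (Hpos j)). }
  assert (F3 : forall j (u : X), norm (minus u (fst (ps (S j)))) <= 3 * snd (ps (S j)) ->
             norm (Tn (fst (f j (ps j))) u) > INR j).
  { intros j u. rewrite EpS. apply (Hf j (ps j) (Hpos j)). }
  clearbody ps.
  assert (Tele : forall d p, norm (minus (fst (ps (p + d)%nat)) (fst (ps p))) <= 2 * (snd (ps p) - snd (ps (p + d)%nat))).
  { induction d; intro p.
    - rewrite Nat.add_0_r, Xnorm_mm. lra.
    - rewrite Nat.add_succ_r.
      assert (H := norm_minus_tri (fst (ps (S (p + d)))) (fst (ps (p + d)%nat)) (fst (ps p))).
      specialize (IHd p). specialize (F1 (p + d)%nat). specialize (F2 (p + d)%nat). lra. }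
  assert (Geo : forall p, snd (ps p) <= (1/2) ^ p).
  { induction p. rewrite Ep0. simpl. lra. simpl. specialize (F2 p). lra. }
  set (Fl := filtermap (fun n => fst (ps n)) eventually).
  assert (FlP : ProperFilter Fl) by (apply filtermap_proper_filter; exact eventually_filter).
  assert (Fc : cauchy Fl).
  { intro eps. destruct eps as [eps Heps]; simpl.
    destruct (pow_lt_1_zero (1/2) ltac:(rewrite Rabs_pos_eq; lra) (eps/2) ltac:(lra)) as [N HN].
    exists (fst (ps N)). exists N. intros n Hn.
    apply Xnorm_compat1.
    replace n with (N + (n - N))%nat by lia.
    assert (H1 := Tele (n - N)%nat N). assert (H2 := Geo N).
    assert (H3 := HN N (le_n N)). rewrite Rabs_pos_eq in H3 by (apply pow_le; lra).
    assert (H4 := Hpos (N + (n - N))%nat). lra. }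
  assert (Hlim := complete_cauchy Fl FlP Fc).
  set (xl := lim Fl) in *. clearbody xl.
  destruct (Hpt xl) as [B HB].
  destruct (INR_unbounded B) as [j Hj].
  assert (Hr := Hpos (S j)).
  assert (Hnf := @norm_factor_gt_0 R_AbsRing X).
  assert (He : 0 < snd (ps (S j)) / @norm_factor R_AbsRing X) by (apply Rdiv_lt_0_compat; lra).
  destruct (Hlim (mkposreal _ He)) as [N HN].
  set (m := (S j + (N - S j))%nat).
  assert (Hm : (N <= m)%nat) by (unfold m; lia).
  specialize (HN m Hm). apply Xnorm_compat2 in HN. simpl in HN.
  replace (norm_factor * (snd (ps (S j)) / norm_factor)) with (snd (ps (S j))) in HN by (field; lra).
  assert (H1 := Tele (N - S j)%nat (S j)). fold m in H1.
  assert (H2 := norm_minus_tri xl (fst (ps m)) (fst (ps (S j)))).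
  rewrite (norm_minus_sym xl (fst (ps m))) in H2.
  assert (H3 := Hpos m).
  assert (H5 := F3 j xl ltac:(lra)).
  specialize (HB (fst (f j (ps j)))). lra.
Qed.

End UBP.

Section Semi.
Context {X : CompleteNormedModule R_AbsRing}.

Lemma ball_R (a e t : R) : Rabs (t - a) < e -> ball a e t.
Proof. intro H. exact H. Qed.

Lemma right_cont_ed (Sg : R -> X -> X) (w : X) : C0_semigroup Sg ->
  forall eps, 0 < eps -> exists d, 0 < d /\ forall h, 0 < h < d -> norm (minus (Sg h w) w) < eps.
Proof.
  intros [_ [_ [_ Hc]]] eps He.
  assert (H := proj1 (filterlim_locally_ball_norm _ _) (Hc w) (mkposreal eps He)).
  destruct H as [d Hd]. exists d. split. apply cond_pos.
  intros h Hh. apply (Hd h). apply ball_R. rewrite Rabs_pos_eq; lra. lra.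
Qed.

Lemma finmax (g : nat -> R) (N : nat) : exists B, forall n, (n < N)%nat -> g n <= B.
Proof.
  induction N as [|N [B HB]]. exists 0. intros; lia.
  exists (Rmax B (g N)). intros n Hn.
  destruct (Nat.eq_dec n N) as [->|Hne]. apply Rmax_r.
  eapply Rle_trans. apply HB. lia. apply Rmax_l.
Qed.


Lemma local_bound (Sg : R -> X -> X) : C0_semigroup Sg ->
  exists d M, 0 < d /\ 0 < M /\ forall t, 0 <= t <= d -> forall z : X, norm (Sg t z) <= M * norm z.
Proof.
  intros HS. pose proof HS as [Hlin [H0 [Hsg Hc]]]. apply NNPP; intro Hno.
  assert (Hn : forall n : nat, exists t, (0 <= t <= / INR (S n)) /\ exists z : X, norm (Sg t z) > INR (S n) * norm z).
  { intro n. apply NNPP; intro H1. apply Hno. exists (/ INR (S n)), (INR (S n)).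
    split. apply Rinv_0_lt_compat, lt_0_INR; lia. split. apply lt_0_INR; lia.
    intros t Ht z. apply Rnot_lt_le; intro H2. apply H1. exists t. split; [exact Ht| exists z; exact H2]. }
  set (tn := fun n => proj1_sig (constructive_indefinite_description _ (Hn n))).
  assert (Htn : forall n, (0 <= tn n <= / INR (S n)) /\ exists z : X, norm (Sg (tn n) z) > INR (S n) * norm z).
  { intro n. exact (proj2_sig (constructive_indefinite_description _ (Hn n))). }
  clearbody tn.
  destruct (ubp (fun n => Sg (tn n))) as [M HM].
  - intro n. apply Hlin. apply Htn.
  - intro z. destruct (right_cont_ed Sg z HS 1 ltac:(lra)) as [d [Hd Hdz]].
    assert (Hsm : forall t, 0 <= t < d -> norm (Sg t z) <= norm z + 1).
    { intros t Ht. destruct (Req_dec t 0) as [->|Ht0]. rewrite H0. lra.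
      assert (H1 := Hdz t ltac:(lra)). assert (H2 := norm_rev_tri (Sg t z) z).
      lra. }
    destruct (archimed_cor1 d Hd) as [N [HN HN0]].
    destruct (finmax (fun n => norm (Sg (tn n) z)) N) as [B1 HB1].
    exists (Rmax B1 (norm z + 1)). intro n.
    destruct (Nat.lt_ge_cases n N) as [Hl|Hl].
    + eapply Rle_trans. apply (HB1 n Hl). apply Rmax_l.
    + eapply Rle_trans. 2: apply Rmax_r. apply Hsm. split. apply Htn.
      eapply Rle_lt_trans. apply Htn. eapply Rle_lt_trans. 2: exact HN.
      apply Rinv_le_contravar. apply lt_0_INR; lia. apply le_INR; lia.
  - destruct (INR_unbounded M) as [n Hn'].
    destruct (Htn n) as [_ [z Hz]]. specialize (HM n z). simpl in HM.
    rewrite S_INR in Hz. assert (Hz0 := Xnorm_ge_0 z). nra.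
Qed.

Lemma global_bound (Sg : R -> X -> X) : C0_semigroup Sg -> forall L,
  exists K, 0 < K /\ forall t, 0 <= t <= L -> forall z : X, norm (Sg t z) <= K * norm z.
Proof.
  intros HS L. pose proof HS as [Hlin [H0 [Hsg Hc]]].
  destruct (local_bound Sg HS) as [d [M [Hd [HM HdM]]]].
  assert (Hm : forall m : nat, exists K, 0 < K /\ forall t, 0 <= t <= INR m * d -> forall z : X, norm (Sg t z) <= K * norm z).
  { induction m as [|m [K [HK HKb]]].
    - exists 1. split. lra. intros t Ht z. simpl in Ht. replace t with 0 by lra. rewrite H0. lra.
    - exists (M * K + M). split. nra. intros t Ht z. rewrite S_INR in Ht.
      assert (Hz := Xnorm_ge_0 z).
      destruct (Rle_lt_dec t d) as [Htd|Htd].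
      + apply Rle_trans with (M * norm z). apply HdM; lra.
        assert (0 <= M * K * norm z) by (apply Rmult_le_pos; nra). nra.
      + replace t with ((t - d) + d) by ring. rewrite Hsg by lra.
        eapply Rle_trans. apply HKb. nra.
        assert (H1 := HdM d ltac:(lra) z). assert (0 <= norm (Sg d z)) by apply Xnorm_ge_0. nra. }
  destruct (INR_archimed d L) as [m Hm']. lra.
  destruct (Hm m) as [K [HK HKb]]. exists K. split. exact HK. intros t Ht. apply HKb. lra.
Qed.

Lemma strong_cont (Sg : R -> X -> X) (L : R) : C0_semigroup Sg -> forall (w : X) u0, 0 <= u0 <= L ->
  forall eps, 0 < eps -> exists d, 0 < d /\ forall u, 0 <= u <= L -> Rabs (u - u0) < d ->
    norm (minus (Sg u w) (Sg u0 w)) < eps.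
Proof.
  intros HS w u0 Hu0 eps He. pose proof HS as [Hlin [H0 [Hsg Hc]]].
  destruct (global_bound Sg HS L) as [K [HK HKb]].
  destruct (right_cont_ed Sg w HS (eps / K) ltac:(apply Rdiv_lt_0_compat; lra)) as [d [Hd Hdw]].
  exists d. split. exact Hd. intros u Hu Hud.
  destruct (Rtotal_order u u0) as [Hlt|[Heq|Hgt]].
  - rewrite norm_minus_sym.
    replace u0 with ((u0 - u) + u) at 1 by ring. rewrite (Rplus_comm (u0 - u) u), Hsg by lra.
    rewrite <- (Xlin_minus _ (Hlin u ltac:(lra))).
    eapply Rle_lt_trans. apply HKb. lra.
    assert (H1 := Hdw (u0 - u) ltac:(rewrite Rabs_minus_sym, Rabs_pos_eq in Hud; lra)).
    replace eps with (K * (eps / K)) by (field; lra). apply Rmult_lt_compat_l; lra.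
  - subst. rewrite Xnorm_mm. lra.
  - replace u with (u0 + (u - u0)) at 1 by ring. rewrite Hsg by lra.
    rewrite <- (Xlin_minus _ (Hlin u0 ltac:(lra))).
    eapply Rle_lt_trans. apply HKb. lra.
    assert (H1 := Hdw (u - u0) ltac:(rewrite Rabs_pos_eq in Hud; lra)).
    replace eps with (K * (eps / K)) by (field; lra). apply Rmult_lt_compat_l; lra.
Qed.

End Semi.

Section Cont.
Context {X : CompleteNormedModule R_AbsRing}.

Definition clamp (L s : R) := Rmax 0 (Rmin L s).

Lemma clamp_in L s : 0 <= L -> 0 <= clamp L s <= L.
Proof. intro. unfold clamp, Rmax, Rmin. repeat destruct Rle_dec; lra. Qed.

Lemma clamp_lip L u s : 0 <= L -> Rabs (clamp L u - clamp L s) <= Rabs (u - s).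
Proof. intro. unfold clamp, Rmax, Rmin. repeat destruct Rle_dec; unfold Rabs; repeat destruct Rcase_abs; lra. Qed.

Lemma clamp_id L s : 0 <= s <= L -> clamp L s = s.
Proof. intro. unfold clamp, Rmax, Rmin. repeat destruct Rle_dec; lra. Qed.

Lemma cont_ed (f : R -> X) s : (forall eps, 0 < eps -> exists d, 0 < d /\ forall u, Rabs (u - s) < d -> norm (minus (f u) (f s)) < eps) -> continuous f s.
Proof.
  intro H. refine (proj2 (filterlim_locally_ball_norm f (f s)) _). intros [e He].
  destruct (H e He) as [d [Hd Hd']]. exists (mkposreal d Hd). intros u Hu. apply Hd'. exact Hu.
Qed.

Lemma ed_cont (f : R -> X) s : continuous f s -> forall eps, 0 < eps -> exists d, 0 < d /\ forall u, Rabs (u - s) < d -> norm (minus (f u) (f s)) < eps.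
Proof.
  intros H e He. destruct (proj1 (filterlim_locally_ball_norm _ _) H (mkposreal e He)) as [d Hd].
  exists d. split. apply cond_pos. intros u Hu. apply Hd. exact Hu.
Qed.

Lemma clamp_cont (L : R) (x : R -> X) : 0 <= L -> cont_on_0T L x -> forall s, continuous (fun s => x (clamp L s)) s.
Proof.
  intros HL Hx s. apply cont_ed. intros e He.
  destruct (proj1 (filterlim_locally_ball_norm _ _) (Hx (clamp L s) (clamp_in L s HL)) (mkposreal e He)) as [d Hd].
  exists d. split. apply cond_pos. intros u Hu. apply Hd.
  - apply ball_R. eapply Rle_lt_trans. apply clamp_lip; exact HL. exact Hu.
  - apply clamp_in; exact HL.
Qed.

Lemma pair_cont (F : X * X -> X) (a b : R -> X) s : (forall p, continuous F p) ->
  continuous a s -> continuous b s -> continuous (fun s => F (a s, b s)) s.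
Proof.
  intros HF Ha Hb. unfold continuous.
  apply (filterlim_comp _ _ _ (fun u => (a u, b u)) F (locally s) (locally (a s, b s))).
  2: apply HF.
  apply filterlim_locally. intro eps.
  assert (H1 := proj1 (filterlim_locally _ _) Ha eps).
  assert (H2 := proj1 (filterlim_locally _ _) Hb eps).
  generalize (filter_and _ _ H1 H2). apply filter_imp. intros u [Hu1 Hu2].
  split; assumption.
Qed.

Lemma integrand_cont (Sg : R -> X -> X) (L : R) (w : R -> X) : C0_semigroup Sg -> 0 <= L ->
  (forall s, continuous w s) -> forall s, continuous (fun s => Sg (L - clamp L s) (w s)) s.
Proof.
  intros HS HL Hw s. pose proof HS as [Hlin _].
  destruct (global_bound Sg HS L) as [K [HK HKb]].
  apply cont_ed. intros e He.
  destruct (ed_cont w s (Hw s) (e / (2 * K))) as [d1 [Hd1 Hd1']]. apply Rdiv_lt_0_compat; lra.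
  assert (Hc := clamp_in L s HL).
  destruct (strong_cont Sg L HS (w s) (L - clamp L s) ltac:(lra) (e / 2) ltac:(lra)) as [d2 [Hd2 Hd2']].
  exists (Rmin d1 d2). split. apply Rmin_glb_lt; lra. intros u Hu.
  assert (Hu1 : Rabs (u - s) < d1) by (eapply Rlt_le_trans; [exact Hu| apply Rmin_l]).
  assert (Hu2 : Rabs (u - s) < d2) by (eapply Rlt_le_trans; [exact Hu| apply Rmin_r]).
  assert (Hcu := clamp_in L u HL).
  assert (A1 : norm (minus (Sg (L - clamp L u) (w u)) (Sg (L - clamp L u) (w s))) < e / 2).
  { rewrite <- (Xlin_minus _ (Hlin (L - clamp L u) ltac:(lra))).
    eapply Rle_lt_trans. apply HKb. lra.
    assert (H := Hd1' u Hu1).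
    replace (e / 2) with (K * (e / (2 * K))) by (field; lra). apply Rmult_lt_compat_l; lra. }
  assert (A2 : norm (minus (Sg (L - clamp L u) (w s)) (Sg (L - clamp L s) (w s))) < e / 2).
  { apply Hd2'. lra. replace (L - clamp L u - (L - clamp L s)) with (- (clamp L u - clamp L s)) by ring.
    rewrite Rabs_Ropp. eapply Rle_lt_trans. apply clamp_lip. exact HL. exact Hu2. }
  assert (H := norm_minus_tri (Sg (L - clamp L u) (w u)) (Sg (L - clamp L u) (w s)) (Sg (L - clamp L s) (w s))).
  lra.
Qed.

End Cont.

From Stdlib Require Import ssreflect.

Section Alg.
Context {X : CompleteNormedModule R_AbsRing}.

Lemma Xminus_def (u v : X) : minus u v = plus u (opp v). Proof. reflexivity. Qed.
Lemma Xplus_swap (a b c : X) : plus a (plus b c) = plus b (plus a c).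
Proof. rewrite !Xplus_assoc (Xplus_comm a b). reflexivity. Qed.
Lemma Xplus_cancel1 (a c : X) : plus a (plus (opp a) c) = c.
Proof. rewrite Xplus_assoc Xplus_opp_r Xplus_zero_l. reflexivity. Qed.

Lemma G1 (A F P Q g : X) :
  minus (plus A F) (plus (plus (plus A (opp P)) Q) (minus F g)) = plus (plus P g) (opp Q).
Proof.
  rewrite !Xminus_def !Xopp_plus !Xopp_opp -!Xplus_assoc.
  rewrite (Xplus_swap F (opp A)) Xplus_cancel1.
  rewrite (Xplus_swap F P) (Xplus_swap F (opp Q)) Xplus_cancel1.
  rewrite (Xplus_comm (opp Q) g). reflexivity.
Qed.

Lemma Xscal_assoc (c d : R) (v : X) : scal c (scal d v) = scal (c * d) v.
Proof. exact (scal_assoc c d v). Qed.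
Lemma Xscal_one (v : X) : scal 1 v = v.
Proof. exact (scal_one v). Qed.
Lemma Xscal_distr_l (c : R) (u v : X) : scal c (plus u v) = plus (scal c u) (scal c v).
Proof. exact (scal_distr_l c u v). Qed.
Lemma Xscal_opp_r (c : R) (u : X) : scal c (opp u) = opp (scal c u).
Proof. exact (scal_opp_r c u). Qed.
Lemma XRInt_point (f : R -> X) (c : R) : RInt f c c = zero.
Proof. exact (RInt_point c f). Qed.
End Alg.

Theorem mainTheorem1 (X : CompleteNormedModule R_AbsRing)
  (S : R -> X -> X) (D : X -> Prop) (A : X -> X) (T a b k : R)
  (F G : X * X -> X) (x y : R -> X) :
  C0_semigroup S -> is_generator S D A ->
  0 < T -> 0 < a -> 0 < b -> 0 < k ->
  (forall p, continuous F p) -> (forall p, continuous G p) ->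
  cont_on_0T T x -> cont_on_0T T y ->
  (forall t, 0 <= t <= T -> x t = N1 S T a b k F G x y t) ->
  (forall t, 0 <= t <= T -> y t = N2 S T a b k F G x y t) ->
  (forall t, 0 <= t <= T ->
     x t = plus (S t (x 0)) (RInt (fun s => S (t - s) (F (x s, y s))) 0 t) /\
     y t = plus (S t (y 0)) (RInt (fun s => S (t - s) (G (x s, y s))) 0 t)) /\
  minus (x T) (scal a (x 0)) = scal k (minus (y T) (scal b (y 0))).
Proof.
  move=> HS Hgen HT Ha Hb Hk HF HG Hx Hy HN1 HN2.
  move: (HS) => [Hlin [H0 [Hsg Hc]]].
  pose I := Iterm S T k F G x y.
  pose P1 := plus (plus (plus (S T (x 0)) (opp (scal k (S T (y 0))))) (scal (k * b) (y 0))) I.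
  pose P2 := minus (plus (plus (opp (S T (x 0))) (scal k (S T (y 0)))) (scal a (x 0))) I.
  have E1 : forall t, 0 <= t <= T -> x t = plus (scal (/ a) (S t P1)) (RInt (fun s => S (t - s) (F (x s, y s))) 0 t) := HN1.
  have E2 : forall t, 0 <= t <= T -> y t = plus (scal (/ (k * b)) (S t P2)) (RInt (fun s => S (t - s) (G (x s, y s))) 0 t) := HN2.
  have HT0 : 0 <= T by lra.
  have H0T : 0 <= 0 <= T by lra.
  have P1eq : P1 = scal a (x 0).
  { have h := E1 0 H0T. rewrite H0 XRInt_point Xplus_zero_r in h.
    rewrite h Xscal_assoc (Rinv_r a) ?Xscal_one //; lra. }
  have P2eq : P2 = scal (k * b) (y 0).
  { have h := E2 0 H0T. rewrite H0 XRInt_point Xplus_zero_r in h.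
    have kb : k * b <> 0 by nra.
    rewrite h Xscal_assoc (Rinv_r (k * b)) ?Xscal_one //. }
  have Part1 : forall t, 0 <= t <= T ->
     x t = plus (S t (x 0)) (RInt (fun s => S (t - s) (F (x s, y s))) 0 t) /\
     y t = plus (S t (y 0)) (RInt (fun s => S (t - s) (G (x s, y s))) 0 t).
  { move=> t Ht. split.
    - rewrite {1}(E1 t Ht) P1eq (Xlin_scal _ (Hlin t (proj1 Ht))) Xscal_assoc (Rinv_l a) ?Xscal_one //; lra.
    - have kb : k * b <> 0 by nra.
      rewrite {1}(E2 t Ht) P2eq (Xlin_scal _ (Hlin t (proj1 Ht))) Xscal_assoc (Rinv_l (k * b)) ?Xscal_one //. }
  split; [exact Part1|].
  pose w1 := fun s => F (x (clamp T s), y (clamp T s)).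
  pose w2 := fun s => G (x (clamp T s), y (clamp T s)).
  have Hw1 : forall s, continuous w1 s :=
    fun s => pair_cont F _ _ s HF (clamp_cont T x HT0 Hx s) (clamp_cont T y HT0 Hy s).
  have Hw2 : forall s, continuous w2 s :=
    fun s => pair_cont G _ _ s HG (clamp_cont T x HT0 Hx s) (clamp_cont T y HT0 Hy s).
  pose g1 := fun s => S (T - clamp T s) (w1 s).
  pose g2 := fun s => S (T - clamp T s) (w2 s).
  have Hg1 : ex_RInt g1 0 T.
  { apply ex_RInt_continuous => z _. exact (integrand_cont S T w1 HS HT0 Hw1 z). }
  have Hg2 : ex_RInt g2 0 T.
  { apply ex_RInt_continuous => z _. exact (integrand_cont S T w2 HS HT0 Hw2 z). }
  have EF : RInt (fun s => S (T - s) (F (x s, y s))) 0 T = RInt g1 0 T.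
  { apply RInt_ext => s. rewrite (Rmin_left 0 T HT0) (Rmax_right 0 T HT0).
    move=> Hs. rewrite /g1 /w1 clamp_id //; lra. }
  have EG : RInt (fun s => S (T - s) (G (x s, y s))) 0 T = RInt g2 0 T.
  { apply RInt_ext => s. rewrite (Rmin_left 0 T HT0) (Rmax_right 0 T HT0).
    move=> Hs. rewrite /g2 /w2 clamp_id //; lra. }
  have EI : I = minus (RInt g1 0 T) (scal k (RInt g2 0 T)).
  { rewrite /I /Iterm.
    transitivity (RInt (fun s => minus (g1 s) (scal k (g2 s))) 0 T).
    - apply RInt_ext => s. rewrite (Rmin_left 0 T HT0) (Rmax_right 0 T HT0).
      move=> Hs. rewrite /g1 /g2 /w1 /w2 (clamp_id T s ltac:(lra)).
      rewrite (Xlin_minus _ (Hlin (T - s) ltac:(lra))) (Xlin_scal _ (Hlin (T - s) ltac:(lra))).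
      reflexivity.
    - rewrite (RInt_minus g1 (fun s => scal k (g2 s)) 0 T Hg1 (ex_RInt_scal g2 0 T k Hg2)) (RInt_scal g2 0 T k Hg2). reflexivity. }
  have [xT yT] := Part1 T (conj HT0 (Rle_refl T)).
  rewrite {1}xT {1}yT -P1eq /P1 EI EF EG G1.
  rewrite Xminus_def !Xscal_distr_l Xscal_opp_r Xscal_assoc. reflexivity.
Qed.
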